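(* Consider the mining game with $N\ge 2$ miners, costs-per-hash $0<c_1\le\dots\le c_N$, reward $R>0$ and capacity parameter $\gamma\ge0$. The number of active miners in the unique equilibrium hash rate profile is the largest integer $n$ with $2\le n\le N$ such that $$c_n<\frac{c^{(n)}+R\gamma/c_n}{n-1},\qquad c^{(n)}=\sum_{i=1}^n c_i.$$ This number $n$ is (weakly) increasing in $R$ and in $\gamma$.
   Context: Mining game: $N\ge2$ miners with costs-per-hash $0<c_1\le\dots\le c_N$; each miner $i$ chooses $h_i\ge0$, $H=\sum_j h_j$, and the payoff of miner $i$ is $\frac{h_i}{H}R-c_ih_i-\frac{\gamma}{2}h_i^2$ if $H>0$, and $0$ if $H=0$. An equilibrium hash rate profile is a pure-strategy Nash equilibrium $h^*\in[0,\infty)^N$; it exists and is unique. Miner $i$ is active if $h_i^*>0$. *)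

(* Defs.v *)
From HB Require Import structures.
From mathcomp Require Import all_boot all_order all_algebra.
From mathcomp Require Import reals.
Set Implicit Arguments. Unset Strict Implicit. Unset Printing Implicit Defensive.
Import Order.TTheory GRing.Theory Num.Theory.
Local Open Scope ring_scope.

(* Miners are indexed 1..N; costs c : nat -> R, hash profile h : nat -> R
   (only the values at indices 1..N are relevant). r is the reward R,
   g is the capacity parameter gamma. *)

Section Mining.
Variable R : realType.

Definition total_hash (N : nat) (h : nat -> R) : R := \sum_(1 <= j < N.+1) h j.

Definition payoff (N : nat) (c : nat -> R) (r g : R) (h : nat -> R) (i : nat) : R :=
  let H := total_hash N h in
  if 0 < H then h i / H * r - c i * h i - g / 2 * h i ^+ 2 else 0.

Definition deviate (h : nat -> R) (i : nat) (x : R) : nat -> R :=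
  fun j => if j == i then x else h j.

Definition is_equilibrium (N : nat) (c : nat -> R) (r g : R) (h : nat -> R) : Prop :=
  (forall i, (1 <= i <= N)%N -> 0 <= h i) /\
  (forall i, (1 <= i <= N)%N -> forall x : R, 0 <= x ->
      payoff N c r g (deviate h i x) i <= payoff N c r g h i).

Definition num_active (N : nat) (h : nat -> R) : nat :=
  count (fun i => 0 < h i) (iota 1 N).

Definition cum_cost (c : nat -> R) (n : nat) : R := \sum_(1 <= i < n.+1) c i.

Definition active_cond (c : nat -> R) (r g : R) (n : nat) : bool :=
  c n < (cum_cost c n + r * g / c n) / (n%:R - 1).

Definition n_active (N : nat) (c : nat -> R) (r g : R) : nat :=
  (\max_(2 <= n < N.+1 | active_cond c r g n) n)%N.

End Mining.

(* Main.v *)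
Require Import Defs.
From HB Require Import structures.
From mathcomp Require Import all_boot all_order all_algebra.
From mathcomp Require Import reals ring lra zify.
Import Order.TTheory GRing.Theory Num.Theory.
Local Open Scope ring_scope.

Section Aux.
Set Implicit Arguments. Unset Strict Implicit.
Variable R : realType.

Lemma small_x (d A B : R) : 0 < d -> 0 <= A -> 0 <= B ->
  exists x : R, [/\ 0 < x, x < 1 & x * (A + B * x) < d].
Proof.
move=> d0 A0 B0.
have D0 : 0 < A + B + 2 * d by lra.
exists (d / (A + B + 2 * d)).
have xD : d / (A + B + 2 * d) * (A + B + 2 * d) = d.
  by rewrite mulfVK // gt_eqF.
set x := d / _ in xD *.
have x0 : 0 < x by rewrite /x divr_gt0.
have x1 : x < 1 by nra.
split => //; nra.
Qed.

Lemma sum_iota_D1 (N i : nat) (F : nat -> R) : (1 <= i <= N)%N ->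
  \sum_(1 <= j < N.+1) F j = F i + \sum_(1 <= j < N.+1 | j != i) F j.
Proof.
move=> hi; apply: bigD1_seq; last exact: iota_uniq.
by rewrite mem_index_iota ltnS.
Qed.

Lemma total_deviate (N i : nat) (h : nat -> R) x : (1 <= i <= N)%N ->
  total_hash N (deviate h i x) = total_hash N h - h i + x.
Proof.
move=> hi; rewrite /total_hash (sum_iota_D1 _ hi) (sum_iota_D1 h hi).
rewrite /deviate eqxx.
under eq_bigr => j /negbTE -> do [].
rewrite addrC; lra.
Qed.

Lemma others_ge0 (N i : nat) (h : nat -> R) : (1 <= i <= N)%N ->
  (forall j, (1 <= j <= N)%N -> 0 <= h j) -> 0 <= total_hash N h - h i.
Proof.
move=> hi h0; rewrite /total_hash (sum_iota_D1 _ hi) addrC addKr.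
rewrite big_seq_cond; apply: sumr_ge0 => j /andP[]; rewrite mem_index_iota ltnS.
by move=> /h0.
Qed.

Lemma dev_ineq N c r g (h : nat -> R) i x :
  is_equilibrium N c r g h -> (1 <= i <= N)%N -> 0 < total_hash N h -> 0 < x ->
  r * (total_hash N h - h i) * (x - h i) <=
  (total_hash N h - h i + x) * total_hash N h * (x - h i) * (c i + g * (x + h i) / 2).
Proof.
move=> [h0 heq] hi H0 x0.
set H := total_hash N h in H0 *; set S := H - h i.
have S0 : 0 <= S by apply: others_ge0.
have a0 := h0 i hi.
have := heq i hi x (ltW x0).
rewrite /payoff total_deviate // -/H -/S /deviate eqxx H0.
have -> : (0 < S + x) = true by apply/idP; lra.
have Sx0 : 0 < S + x by lra.
have u1 : x / (S + x) * (S + x) = x by rewrite mulfVK // gt_eqF.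
have v1 : h i / H * H = h i by rewrite mulfVK // gt_eqF.
have HS : H = S + h i by rewrite /S; lra.
move: u1 v1; set u := x / _; set v := h i / _ => u1 v1 ineq.
have P0 : 0 <= (S + x) * H by rewrite mulr_ge0 // ltW.
have := ler_wpM2r P0 ineq.
move: u1 v1; rewrite HS => u1 v1.
move=> J.
have e1 : u * r * ((S + x) * (S + h i)) = x * r * (S + h i) by rewrite -[in RHS]u1; ring.
have e2 : v * r * ((S + x) * (S + h i)) = h i * r * (S + x) by rewrite -[in RHS]v1; ring.
move: J; rewrite !mulrBl e1 e2 => J.
nra.
Qed.

Lemma hash_ge0 N (h : nat -> R) : (forall j, (1 <= j <= N)%N -> 0 <= h j) ->
  0 <= total_hash N h.
Proof.
move=> h0; rewrite /total_hash big_seq_cond; apply: sumr_ge0 => j /andP[].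
by rewrite mem_index_iota ltnS => /h0.
Qed.

Lemma H_pos N c r g (h : nat -> R) : (1 <= N)%N -> 0 < c 1%N -> 0 < r -> 0 <= g ->
  is_equilibrium N c r g h -> 0 < total_hash N h.
Proof.
move=> N1 c1 r0 g0 [h0 heq].
have H0 := hash_ge0 h0.
rewrite lt_neqAle H0 andbT; apply/negP => /eqP Hz.
have i1 : (1 <= 1 <= N)%N by rewrite N1.
have S0 := others_ge0 i1 h0.
have a0 := h0 _ i1.
have a00 : h 1%N = 0 by rewrite -Hz in S0 *; lra.
have g2 : 0 <= g / 2 by lra.
have [x [x0 x1 xs]] := small_x r0 (ltW c1) g2.
have := heq _ i1 x (ltW x0).
rewrite /payoff total_deviate // -Hz a00 subr0 add0r x0 /deviate eqxx.
rewrite ltxx divff ?gt_eqF // mul1r.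
nra.
Qed.

Lemma foc_active N c r g (h : nat -> R) i :
  is_equilibrium N c r g h -> (1 <= i <= N)%N -> 0 <= g ->
  (forall i, (1 <= i <= N)%N -> 0 < c i) ->
  0 < total_hash N h -> 0 < h i ->
  r * (total_hash N h - h i) = total_hash N h ^+ 2 * (c i + g * h i).
Proof.
move=> heq hi g0 ci_pos H0 a0.
have S0 := others_ge0 hi heq.1.
have ci0 : 0 <= c i + g * h i + g * total_hash N h / 2.
  have := ci_pos i hi; have := mulr_ge0 g0 (ltW a0).
  have := mulr_ge0 g0 (ltW H0); lra.
apply/eqP; rewrite -subr_eq0; apply/eqP.
set H := total_hash N h in H0 S0 ci0 *.
set phi := _ - _.
have [phip|phin|//] := ltgtP phi 0.
- have A0 : 0 <= h i * H * (c i + g * h i + g * H / 2) by rewrite !mulr_ge0 // ltW.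
  have phin : 0 < - phi by lra.
  have [y [y0 y1 ys]] := small_x phin A0 (lexx 0).
  have s0 : 0 < h i * y by rewrite mulr_gt0.
  have x0 : 0 < h i - h i * y by nra.
  have := dev_ineq heq hi H0 x0.
  rewrite -/H => J.
  have K : (h i * y) * (phi + (h i * y) * H * (c i + g * h i + g * H / 2 - g * (h i * y) / 2)) >= 0.
    rewrite /phi; nra.
  rewrite pmulr_rge0 // in K.
  have gs : 0 <= (h i * y) * H * (g * (h i * y) / 2).
    by rewrite !mulr_ge0 // ?ltW //; lra.
  move: ys; rewrite mul0r addr0 => ys.
  have E : h i * y * H * (c i + g * h i + g * H / 2) = y * (h i * H * (c i + g * h i + g * H / 2)) by ring.
  nra.
- have A0 : 0 <= H * (c i + g * h i + g * H / 2) by rewrite mulr_ge0 // ltW.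
  have B0 : 0 <= H * (g / 2) by apply: mulr_ge0; lra.
  have [t [t0 t1 ts]] := small_x phin A0 B0.
  have x0 : 0 < h i + t by lra.
  have := dev_ineq heq hi H0 x0.
  rewrite -/H => J.
  have K : t * (phi - t * (H * (c i + g * h i + g * H / 2) + H * (g / 2) * t)) <= 0.
    move: J; rewrite /phi /H; set HH := total_hash N h; move=> J.
    set L := (X in X <= _) in J; set Rr := (X in _ <= X) in J.
    have -> : t * (r * (HH - h i) - HH ^+ 2 * (c i + g * h i) -
      t * (HH * (c i + g * h i + g * HH / 2) + HH * (g / 2) * t)) = L - Rr.
      by rewrite /L /Rr; field.
    lra.
  rewrite pmulr_rle0 // in K.
  nra.
Qed.

Lemma foc_inactive N c r g (h : nat -> R) i :
  is_equilibrium N c r g h -> (1 <= i <= N)%N -> 0 <= g ->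
  (forall i, (1 <= i <= N)%N -> 0 < c i) ->
  0 < total_hash N h -> h i = 0 -> r <= total_hash N h * c i.
Proof.
move=> heq hi g0 ci_pos H0 a0.
set H := total_hash N h in H0 *.
rewrite leNgt; apply/negP => d0; rewrite -subr_gt0 in d0.
have A0 : 0 <= c i + g * H / 2.
  have := ci_pos i hi; have := mulr_ge0 g0 (ltW H0); lra.
have B0 : 0 <= g / 2 by lra.
have [x [x0 x1 xs]] := small_x d0 A0 B0.
have := dev_ineq heq hi H0 x0.
rewrite -/H a0 !subr0 addr0 => J.
have K : x * H * (r - H * c i - x * (c i + g * H / 2 + g / 2 * x)) <= 0.
  set L := (X in X <= _) in J; set Rr := (X in _ <= X) in J.
  have -> : x * H * (r - H * c i - x * (c i + g * H / 2 + g / 2 * x)) = L - Rr.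
    by rewrite /L /Rr; field.
  lra.
rewrite pmulr_rle0 ?mulr_gt0 // in K.
lra.
Qed.
Lemma prefix_count (P : pred nat) (N : nat) :
  (forall i j, (1 <= i)%N -> (i <= j)%N -> (j <= N)%N -> P j -> P i) ->
  forall i, (1 <= i <= N)%N -> P i = (i <= count P (iota 1 N))%N.
Proof.
elim: N => [|N IH] hP i /andP[i1 iN]; first by lia.
have hP' : forall i j, (1 <= i)%N -> (i <= j)%N -> (j <= N)%N -> P j -> P i.
  by move=> a b a1 ab bN; apply: hP => //; lia.
have kN : (count P (iota 1 N) <= N)%N by rewrite (leq_trans (count_size _ _)) // size_iota.
rewrite -[N.+1]addn1 iotaD count_cat /= addn0 add1n.
case PN: (P N.+1).
- have allP : forall j, (1 <= j <= N.+1)%N -> P j.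
    by move=> j /andP[j1 jN]; apply: hP PN.
  case: (posnP N) => [N0|N0].
    by subst N; rewrite /= allP //; lia.
  have : (N <= count P (iota 1 N))%N.
    by rewrite -IH // ?allP //; lia.
  move=> NK; rewrite allP ?i1 //; symmetry; apply/idP; lia.
- rewrite addn0; case: (ltnP i N.+1) => iN'.
    by apply: IH => //; lia.
  have -> : i = N.+1 by lia.
  by rewrite PN; symmetry; apply/negbTE; lia.
Qed.

Lemma nactive_mono N (c : nat -> R) (r g r' g' : R) :
  (forall n, (2 <= n <= N)%N -> active_cond c r g n -> active_cond c r' g' n) ->
  (n_active N c r g <= n_active N c r' g')%N.
Proof.
move=> hmono; apply/bigmax_leqP_seq => n; rewrite mem_index_iota ltnS => hn hP.
by apply: leq_bigmax_seq; [rewrite mem_index_iota ltnS | apply: hmono].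
Qed.

Lemma cum_cost_ge0 N (c : nat -> R) k : (k <= N)%N ->
  (forall i, (1 <= i <= N)%N -> 0 < c i) -> 0 <= cum_cost c k.
Proof.
move=> kN cp; rewrite /cum_cost big_seq_cond; apply: sumr_ge0 => j /andP[].
rewrite mem_index_iota ltnS => /andP[j1 jk] _; apply/ltW/cp; lia.
Qed.

End Aux.

Theorem proposition4p4 (R : realType) (N : nat) (c : nat -> R) (r g : R) :
  (2 <= N)%N ->
  (forall i, (1 <= i <= N)%N -> 0 < c i) ->
  (forall i j, (1 <= i)%N -> (i <= j)%N -> (j <= N)%N -> c i <= c j) ->
  0 < r -> 0 <= g ->
  (forall h : nat -> R, is_equilibrium N c r g h ->
      num_active N h = n_active N c r g) /\
  (forall r' : R, r <= r' -> (n_active N c r g <= n_active N c r' g)%N) /\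
  (forall g' : R, g <= g' -> (n_active N c r g <= n_active N c r g')%N).
Proof.
move=> N2 cpos cmono r0 g0.
split; [|split].
2:{ move=> r' rr; apply: nactive_mono => n /andP[n2 nN].
  rewrite /active_cond => hc; apply: (lt_le_trans hc).
  have K1 : 0 < (n%:R - 1 : R).
    by rewrite subr_gt0 (_ : 1 = 1%:R) // ltr_nat; lia.
  rewrite ler_pM2r ?invr_gt0 // lerD2l.
  have cn : 0 < c n by apply: cpos; lia.
  rewrite ler_pM2r ?invr_gt0 //; exact: ler_wpM2r. }
2:{ move=> g' gg; apply: nactive_mono => n /andP[n2 nN].
  rewrite /active_cond => hc; apply: (lt_le_trans hc).
  have K1 : 0 < (n%:R - 1 : R).
    by rewrite subr_gt0 (_ : 1 = 1%:R) // ltr_nat; lia.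
  rewrite ler_pM2r ?invr_gt0 // lerD2l.
  have cn : 0 < c n by apply: cpos; lia.
  rewrite ler_pM2r ?invr_gt0 //; by rewrite ler_pM2l. }
move=> h heq.
have N1 : (1 <= N)%N by lia.
have c1 : 0 < c 1%N by apply: cpos; lia.
have H0 := H_pos N1 c1 r0 g0 heq.
move: H0; set H := total_hash N h => H0.
set p := r / H.
have pH : p * H = r by rewrite mulfVK // gt_eqF.
have p0 : 0 < p by rewrite divr_gt0.
have act : forall i, (1 <= i <= N)%N -> (0 < h i) = (c i < p).
  move=> i hi; have a0 := heq.1 i hi.
  case: (ltrP 0 (h i)) => ha.
  - have := foc_active heq hi g0 cpos H0 ha; rewrite -/H => E.
    symmetry; apply/idP; rewrite /p ltr_pdivlMr //.
    have := mulr_gt0 r0 ha.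
    have := mulr_ge0 (mulr_ge0 (sqr_ge0 H) g0) (ltW ha).
    nra.
  - have hz : h i = 0 by lra.
    have := foc_inactive heq hi g0 cpos H0 hz; rewrite -/H => E.
    symmetry; apply/negbTE; rewrite /p ltr_pdivlMr // -leNgt mulrC //.
have hform : forall i, (1 <= i <= N)%N ->
    h i * (H ^+ 2 * g + r) = if c i < p then r * H - H ^+ 2 * c i else 0.
  move=> i hi; case: ifP => hc.
  - have ha : 0 < h i by rewrite act.
    have := foc_active heq hi g0 cpos H0 ha; rewrite -/H => E.
    nra.
  - have ha : ~~ (0 < h i) by rewrite act //; exact: negbT hc.
    have a0 := heq.1 i hi.
    have -> : h i = 0 by rewrite lt_neqAle a0 andbT negbK in ha; apply/eqP; rewrite eq_sym.
    by rewrite mul0r.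
pose P := fun i => c i < p.
have down : forall i j, (1 <= i)%N -> (i <= j)%N -> (j <= N)%N -> P j -> P i.
  move=> i j i1 ij jN; rewrite /P => hj; apply: le_lt_trans hj; exact: cmono.
have pref := prefix_count down.
set k := count P (iota 1 N) in pref.
have kN : (k <= N)%N by rewrite (leq_trans (count_size _ _)) // size_iota.
have numk : num_active N h = k.
  rewrite /num_active /k; apply: eq_in_count => i; rewrite mem_iota => hi.
  by rewrite /P act //; lia.
rewrite numk.
have S1 : \sum_(1 <= i < N.+1) h i * (H ^+ 2 * g + r) =
    \sum_(1 <= i < N.+1) (if (i <= k)%N then r * H - H ^+ 2 * c i else 0).
  apply: eq_big_nat => i; rewrite ltnS => hi.
  by rewrite hform // -[c i < p]/(P i) (pref i hi).
rewrite -mulr_suml -/(total_hash N h) -/H in S1.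
have k1 : (1 <= k.+1)%N by [].
have kN1 : (k.+1 <= N.+1)%N by rewrite ltnS.
rewrite (@big_cat_nat _ _ _ k.+1 1 N.+1) /= in S1 => //.
rewrite [X in _ = _ + X](eq_big_nat _ _ (F2 := fun=> 0)) in S1; last first.
  by move=> i /andP[ki _]; rewrite leqNgt ki.
rewrite big1_eq addr0 in S1.
rewrite (eq_big_nat _ _ (F2 := fun i => r * H - H ^+ 2 * c i)) in S1; last first.
  by move=> i /andP[_ ik]; rewrite -ltnS ik.
rewrite sumrB sumr_const_nat -mulr_sumr -/(cum_cost c k) subSS subn0 in S1.
set C := cum_cost c k in S1.
have keyeq : (k%:R - 1) * p = C + g * H.
  have HH : H ^+ 2 != 0 by rewrite expf_neq0 // gt_eqF.
  apply/eqP; rewrite -subr_eq0 -(mulIr_eq0 _ (rregP HH)); apply/eqP.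
  move: S1; rewrite -pH -mulr_natl => S1.
  rewrite -[X in _ = X](subrr (H * (H ^+ 2 * g + p * H))).
  rewrite [X in _ = X - _]S1.
  ring.
have gH : 0 <= g * H by rewrite mulr_ge0 // ltW.
have k2 : (2 <= k)%N.
  case: (ltnP k 1) => [k0|k1'].
    have kz : k = 0%N by lia.
    move: keyeq; rewrite /C kz /cum_cost big_geq // => E.
    lra.
  case: (ltnP k 2) => [kl|//].
  have kz : k = 1%N by lia.
  move: keyeq; rewrite /C kz /cum_cost big_nat1 => E.
  lra.
have K1 : 0 < (k%:R - 1 : R).
  by rewrite subr_gt0 (_ : 1 = 1%:R) // ltr_nat.
have e3 : p * ((k%:R - 1) * p) = p * (C + g * H) by rewrite keyeq.
have rg : r * g = p * (g * H) by rewrite -pH; ring.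
apply/eqP; rewrite eqn_leq; apply/andP; split.
- apply: leq_bigmax_seq; first by rewrite mem_index_iota ltnS k2.
  rewrite /active_cond ltr_pdivlMr // -/C.
  have k1b : (1 <= k <= N)%N by rewrite kN andbT; lia.
  have ckp : c k < p by rewrite -[c k < p]/(P k) (pref k k1b).
  have ck0 : 0 < c k by apply: cpos.
  set w := r * g / c k.
  have wc : w * c k = r * g by rewrite /w mulfVK // gt_eqF.
  have F : 0 < (p - c k) * ((k%:R - 1) * c k + g * H).
    by rewrite mulr_gt0 ?subr_gt0 // ltr_pwDl // mulr_gt0.
  have E : c k * (C + w) - c k * (c k * (k%:R - 1)) =
           (p - c k) * ((k%:R - 1) * c k + g * H).
    have e4 : c k * w = p * (g * H) by rewrite mulrC wc rg.
    have gHe : g * H = (k%:R - 1) * p - C by rewrite keyeq; ring.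
    rewrite mulrDr e4 gHe; ring.
  rewrite -(ltr_pM2l ck0); lra.
- apply/bigmax_leqP_seq => n; rewrite mem_index_iota ltnS => /andP[n2 nN] hc.
  rewrite leqNgt; apply/negP => kn.
  move: hc; apply/negP.
  have n1 : (1 <= n <= N)%N by rewrite nN andbT; lia.
  have cnp : ~~ (c n < p) by rewrite -[c n < p]/(P n) (pref n n1) -ltnNge.
  rewrite -leNgt in cnp.
  have cn0 : 0 < c n by apply: cpos.
  have Kn1 : 0 < (n%:R - 1 : R).
    by rewrite subr_gt0 (_ : 1 = 1%:R) // ltr_nat; lia.
  rewrite /active_cond ltr_pdivlMr // -leNgt.
  set w := r * g / c n.
  have wc : w * c n = r * g by rewrite /w mulfVK // gt_eqF.
  have Csplit : cum_cost c n = C + \sum_(k.+1 <= i < n.+1) c i.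
    rewrite /cum_cost (@big_cat_nat _ _ _ k.+1 1 n.+1) //=; lia.
  have Tle : \sum_(k.+1 <= i < n.+1) c i <= (n%:R - k%:R) * c n.
    rewrite -natrB; last by lia.
    rewrite mulr_natl -[(n - k)%N]/(n.+1 - k.+1)%N -sumr_const_nat.
    apply: ler_sum_nat => i /andP[ki iN]; apply: cmono; lia.
  have F : 0 <= (c n - p) * ((k%:R - 1) * c n + g * H).
    by rewrite mulr_ge0 ?subr_ge0 // addr_ge0 // mulr_ge0 // ltW.
  have e4 : c n * w = p * (g * H) by rewrite mulrC wc rg.
  have e5 : p * (g * H) = p * ((k%:R - 1) * p) - p * C by rewrite e3; ring.
  rewrite Csplit.
  set T := \sum_(_ <= _ < _) _ in Tle *.
  have Tc : c n * T <= c n * ((n%:R - k%:R) * c n) by rewrite ler_pM2l.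
  rewrite -(ler_pM2l cn0).
  move: F e4 e5 Tc; set K := (k%:R : R); set Kn := (n%:R : R) => F e4 e5 Tc.
  have E : c n * (c n * (Kn - 1)) - c n * (C + T + w) =
     (c n - p) * ((K - 1) * c n + g * H) + (c n * ((Kn - K) * c n) - c n * T).
    have gHe : g * H = (K - 1) * p - C by rewrite keyeq; ring.
    rewrite !mulrDr e4 gHe; ring.
  lra.
Qed.
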